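(* Let $R$ be an integral domain such that every finitely generated ideal of $R$ is a multiplication ideal. Then $R$ is an avoidance ring.
   Context: All rings are commutative with $1\neq 0$. An ideal $I$ of $R$ is a multiplication ideal if every ideal of $R$ contained in $I$ is of the form $IJ$ for some ideal $J$ of $R$. An ideal $I$ has avoidance if whenever $I_1,\ldots,I_n$ are finitely many ideals of $R$ with $I\subseteq\bigcup_{k=1}^n I_k$, then $I\subseteq I_k$ for some $k$. A ring is an avoidance ring if every ideal of it has avoidance. *)

(* Defs.v *)
From HB Require Import structures.
From mathcomp Require Import all_boot all_algebra.
Set Implicit Arguments. Unset Strict Implicit. Unset Printing Implicit Defensive.
Import GRing.Theory.
Local Open Scope ring_scope.

Definition is_ideal (R : comNzRingType) (I : R -> Prop) : Prop :=
  [/\ I 0,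
      (forall x y, I x -> I y -> I (x + y)) &
      (forall r x, I x -> I (r * x))].

Definition ideal_mul (R : comNzRingType) (I J : R -> Prop) : R -> Prop :=
  fun x => exists (n : nat) (a b : 'I_n -> R),
    (forall i, I (a i) /\ J (b i)) /\ x = \sum_(i < n) a i * b i.

Definition fin_gen_ideal (R : comNzRingType) (I : R -> Prop) : Prop :=
  exists s : seq R, forall x,
    I x <-> exists c : 'I_(size s) -> R, x = \sum_(i < size s) c i * s`_i.

Definition mult_ideal (R : comNzRingType) (I : R -> Prop) : Prop :=
  forall K : R -> Prop, is_ideal K -> (forall x, K x -> I x) ->
    exists J : R -> Prop, is_ideal J /\ (forall x, K x <-> ideal_mul I J x).

Definition has_avoidance (R : comNzRingType) (I : R -> Prop) : Prop :=
  forall (n : nat) (Is : 'I_n -> R -> Prop),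
    (forall k, is_ideal (Is k)) ->
    (forall x, I x -> exists k, Is k x) ->
    exists k, forall x, I x -> Is k x.

Definition avoidance_ring (R : comNzRingType) : Prop :=
  forall I : R -> Prop, is_ideal I -> has_avoidance I.

(* Main.v *)
Require Import Defs.
From mathcomp Require Import all_boot all_algebra.
From mathcomp Require Import boolp classical_sets.
From Stdlib Require Import Classical.
Set Implicit Arguments. Unset Strict Implicit. Unset Printing Implicit Defensive.
Import GRing.Theory.
Local Open Scope ring_scope.

Lemma ideal_sum (R : comNzRingType) (I : R -> Prop) n (F : 'I_n -> R) :
  is_ideal I -> (forall i, I (F i)) -> I (\sum_(i < n) F i).
Proof.
case=> I0 ID IM HF; apply: (big_ind I) => //.
Qed.

Lemma ideal_opp (R : comNzRingType) (I : R -> Prop) x :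
  is_ideal I -> I x -> I (- x).
Proof. by case=> _ _ IM Ix; rewrite -mulN1r; apply: IM. Qed.

Lemma ideal_sub (R : comNzRingType) (I : R -> Prop) x y :
  is_ideal I -> I x -> I y -> I (x - y).
Proof. move=> HI Ix Iy; case: (HI) => _ ID _; apply: ID => //; exact: ideal_opp. Qed.

Lemma im_single (R : comNzRingType) (I J : R -> Prop) a b :
  I a -> J b -> ideal_mul I J (a * b).
Proof.
move=> Ia Jb; exists 1%N, (fun _ => a), (fun _ => b); split => //.
by rewrite big_ord1.
Qed.

Lemma im_mono (R : comNzRingType) (I J J' : R -> Prop) x :
  (forall y, J y -> J' y) -> ideal_mul I J x -> ideal_mul I J' x.
Proof.
move=> H [n [a [b [Hab ->]]]]; exists n, a, b; split => // i.
by case: (Hab i) => ? ?; split => //; apply: H.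
Qed.

Lemma im_ideal (R : comNzRingType) (I J : R -> Prop) :
  is_ideal I -> is_ideal (ideal_mul I J).
Proof.
case=> I0 ID IM; split.
- exists 0%N, (fun _ => 0), (fun _ => 0); split; first by case.
  by rewrite big_ord0.
- move=> x y [n1 [a1 [b1 [H1 ->]]]] [n2 [a2 [b2 [H2 ->]]]].
  exists (n1 + n2)%N,
    (fun i => match split i with inl j => a1 j | inr j => a2 j end),
    (fun i => match split i with inl j => b1 j | inr j => b2 j end).
  split.
    by move=> i; case: (split i) => j.
  rewrite big_split_ord /=; congr (_ + _); apply: eq_bigr => j _.
    by have -> : split (lshift n2 j) = inl j := unsplitK (inl j).
  by have -> : split (rshift n1 j) = inr j := unsplitK (inr j).
- move=> r x [n [a [b [H ->]]]]; exists n, (fun i => r * a i), b; split.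
    by move=> i; case: (H i) => ? ?; split => //; apply: IM.
  by rewrite mulr_sumr; apply: eq_bigr => i _; rewrite mulrA.
Qed.

Lemma mult_cancel (R : idomainType) (J M : R -> Prop) (a : R) :
  is_ideal J -> is_ideal M -> mult_ideal J -> J a -> a != 0 ->
  (forall x, J x -> ideal_mul J M x) -> M 1.
Proof.
move=> HJ HM Hm Ja a0 JJM.
pose P := fun x : R => exists c, x = c * a.
have HP : is_ideal P.
  split; first by exists 0; rewrite mul0r.
  - by move=> x y [c ->] [d ->]; exists (c + d); rewrite mulrDl.
  - by move=> r x [c ->]; exists (r * c); rewrite mulrA.
have PJ : forall x, P x -> J x.
  by move=> x [c ->]; case: HJ => _ _; apply.
have [A [HA PA]] := Hm P HP PJ.
pose T := fun x : R => exists m, M m /\ x = a * m.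
case: HM => M0 MD MM.
have T0 : T 0 by exists 0; rewrite mulr0.
have TD : forall x y, T x -> T y -> T (x + y).
  by move=> x y [m [Mm ->]] [m' [Mm' ->]]; exists (m + m'); rewrite mulrDr; split => //; apply: MD.
have key : forall j al, J j -> A al -> T (j * al).
  move=> j al Jj Aal; have [n [u [v [Huv ->]]]] := JJM j Jj.
  rewrite mulr_suml; apply: (big_ind T) => // i _.
  case: (Huv i) => Ju Mv.
  have /PA [c Hc] : ideal_mul J A (u i * al) by apply: im_single.
  exists (c * v i); split; first by apply: MM.
  by rewrite mulrAC Hc mulrCA mulrA [c * a]mulrC -mulrA.
have /PA [n [u [v [Huv Ha]]]] : P a by exists 1; rewrite mul1r.
have : T a.
  rewrite Ha; apply: (big_ind T) => // i _.
  by case: (Huv i) => ? ?; apply: key.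
case=> m [Mm Eam]; move: Eam; rewrite -{1}(mulr1 a) => /(mulfI a0) ->.
exact: Mm.
Qed.

Definition maxl (R : comNzRingType) (M : R -> Prop) :=
  [/\ is_ideal M, ~ M 1 &
      forall r, ~ M r -> exists s m, M m /\ 1 = m + s * r].

Lemma exists_maxl (R : comNzRingType) (L : R -> Prop) :
  is_ideal L -> ~ L 1 -> exists M, maxl M /\ (forall x, L x -> M x).
Proof.
move=> HL L1.
pose P := fun A : set R => A = set0 \/
   (is_ideal A /\ ~ A 1 /\ forall x, L x -> A x).
have PX : forall A x, P A -> A x -> is_ideal A /\ ~ A 1 /\ forall x, L x -> A x.
  by move=> A x [-> //|].
have [A [PA Amax]] : exists A, P A /\ forall B, (A `<` B)%classic -> ~ P B.
  apply: Zorn_bigcup => F FP Ftot.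
  case: (classic (exists X x, F X /\ X x)) => [[X0 [x0 [FX0 X0x0]]]|none].
    have [[I0 ID IM] [_ LX0]] := PX _ _ (FP _ FX0) X0x0.
    right; split; last split.
    - split.
      + by exists X0.
      + move=> x y [X FX Xx] [Y FY Yy].
        case: (Ftot _ _ FX FY) => [XY|YX].
          have [[_ YD _] _] := PX _ _ (FP _ FY) Yy.
          by exists Y => //; apply: YD => //; apply: XY.
        have [[_ XD _] _] := PX _ _ (FP _ FX) Xx.
        by exists X => //; apply: XD => //; apply: YX.
      + move=> r x [X FX Xx].
        have [[_ _ XM] _] := PX _ _ (FP _ FX) Xx.
        by exists X => //; apply: XM.
    - move=> [X FX X1].
      by have [_ [] ] := PX _ _ (FP _ FX) X1.
    - by move=> x Lx; exists X0 => //; apply: LX0.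
  left; apply/seteqP; split => x //= [X FX Xx].
  by apply: none; exists X, x.
have [HA [A1 LA]] : is_ideal A /\ ~ A 1 /\ forall x, L x -> A x.
  case: PA => [A0|//].
  exfalso; apply: (Amax L); last by right.
  rewrite A0; split; first by move=> x.
  by move=> /(_ 0); case: HL => L0 _ _ /(_ L0).
exists A; split => //; split => // r Ar.
pose B := fun x : R => exists s m, A m /\ x = m + s * r.
case: (HA) => A0 AD AM.
have HB : is_ideal B.
  split.
  - by exists 0, 0; rewrite mul0r addr0.
  - move=> x y [s [m [Am ->]]] [s' [m' [Am' ->]]].
    exists (s + s'), (m + m'); split; first by apply: AD.
    by rewrite mulrDl addrACA.
  - move=> t x [s [m [Am ->]]]; exists (t * s), (t * m); split; first by apply: AM.
    by rewrite mulrDr mulrA.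
apply: NNPP => nB.
apply: (Amax B).
  split.
    by move=> x Ax; exists 0, x; rewrite mul0r addr0.
  move=> /(_ r) H; apply: Ar; apply: H; exists 1, 0; split => //.
  by rewrite mul1r add0r.
right; split => //; split.
  exact: nB.
by move=> x Lx; exists 0, x; rewrite mul0r addr0; split => //; apply: LA.
Qed.

Lemma maxl_prime (R : comNzRingType) (M : R -> Prop) a b :
  maxl M -> ~ M a -> ~ M b -> ~ M (a * b).
Proof.
case=> [[M0 MD MM] M1 Mx] Ma Mb Mab; apply: Mb.
have [s [m [Mm E]]] := Mx a Ma.
have -> : b = m * b + s * (a * b) by rewrite mulrA -mulrDl -E mul1r.
apply: MD; first by rewrite mulrC; apply: MM.
by apply: MM.
Qed.

Lemma maxl_sub (R : comNzRingType) (M M' : R -> Prop) :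
  maxl M -> maxl M' -> (forall x, M x -> M' x) -> forall x, M' x -> M x.
Proof.
case=> _ _ Mx [[_ MD' MM'] M1' _] MM x M'x; apply: NNPP => Mnx.
have [s [m [Mm E]]] := Mx x Mnx; apply: M1'; rewrite E.
by apply: MD'; [apply: MM | apply: MM'].
Qed.

Lemma ord_cases n (k : 'I_n.+1) :
  (exists k' : 'I_n, k = widen_ord (leqnSn n) k') \/ k = ord_max.
Proof.
case: (ltnP k n) => h.
  by left; exists (Ordinal h); apply: val_inj.
by right; apply: val_inj => /=; apply/eqP; rewrite eqn_leq h -ltnS ltn_ord.
Qed.

Lemma prime_avoid (R : comNzRingType) (J : R -> Prop) : is_ideal J ->
  forall n (M : 'I_n -> R -> Prop), (forall k, maxl (M k)) ->
  (forall k, ~ (forall x, J x -> ideal_mul J (M k) x)) ->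
  exists z, J z /\ forall k, ~ ideal_mul J (M k) z.
Proof.
move=> HJ; have [J0 JD JM] := HJ.
elim=> [|n IH] M Mmax MJ.
  by exists 0; split => // -[].
pose M' := fun k : 'I_n => M (widen_ord (leqnSn n) k).
have [z' [Jz' Hz']] := IH M' (fun k => Mmax _) (fun k => MJ _).
pose Mn := M ord_max.
have HJMn : is_ideal (ideal_mul J Mn) by apply: im_ideal.
case: (classic (ideal_mul J Mn z')) => zMn; last first.
  exists z'; split => // k; case: (ord_cases k) => [[k' ->]|->] //.
  exact: Hz'.
case: (classic (exists k', forall x, M' k' x -> Mn x)) => [[k' sub]|nsub].
  exfalso; apply: (Hz' k'); apply: im_mono zMn.
  by apply: maxl_sub => //; apply: Mmax.
have hr : forall k', exists r, M' k' r /\ ~ Mn r.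
  move=> k'; apply: NNPP => h; apply: nsub; exists k' => x M'x.
  by apply: NNPP => nx; apply: h; exists x.
have [r [rMn rM']] : exists r, ~ Mn r /\ forall k' : 'I_n, M' k' r.
  suff : forall m, exists r, ~ Mn r /\ forall k' : 'I_n, (k' < m)%N -> M' k' r.
    by case/(_ n) => r [? H]; exists r; split => // k'; apply: H.
  elim=> [|m [r [rn H]]].
    by exists 1; split => //; case: (Mmax ord_max).
  case: (ltnP m n) => hm; last first.
    exists r; split => // k' _; apply: H; exact: leq_trans (ltn_ord k') hm.
  have [r' [M'r' r'n]] := hr (Ordinal hm).
  exists (r * r'); split; first by apply: maxl_prime => //; apply: Mmax.
  move=> k'; rewrite ltnS leq_eqVlt => /orP [/eqP ek|lk].
    have -> : k' = Ordinal hm by apply: val_inj.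
    by case: (Mmax (widen_ord (leqnSn n) (Ordinal hm))) => [[_ _ MM] _ _]; apply: MM.
  case: (Mmax (widen_ord (leqnSn n) k')) => [[_ _ MM] _ _].
  by rewrite mulrC; apply: MM; apply: H.
have [y [Jy nyMn]] : exists y, J y /\ ~ ideal_mul J Mn y.
  apply: NNPP => h; apply: (MJ ord_max) => x Jx; apply: NNPP => nx.
  by apply: h; exists x.
exists (z' + y * r); split.
  by apply: JD => //; rewrite mulrC; apply: JM.
have [_ _ Mnx] := Mmax ord_max.
move=> k; case: (ord_cases k) => [[k' ->]|->] Hz.
  apply: (Hz' k').
  have HJM' : is_ideal (ideal_mul J (M' k')) by apply: im_ideal.
  have -> : z' = (z' + y * r) - y * r by rewrite addrK.
  by apply: ideal_sub => //; apply: im_single => //; apply: rM'.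
have yr : ideal_mul J Mn (y * r).
  have -> : y * r = (z' + y * r) - z' by rewrite addrAC subrr add0r.
  exact: ideal_sub.
apply: nyMn; have [s [m [Mm E]]] := Mnx r rMn.
have -> : y = y * m + s * (y * r) by rewrite mulrCA -mulrDr -E mulr1.
case: HJMn => _ HD HM; apply: HD; last by apply: HM.
by apply: im_single.
Qed.

Theorem corollary3p14 (R : idomainType) :
  (forall I : R -> Prop, is_ideal I -> fin_gen_ideal I -> mult_ideal I) ->
  avoidance_ring R.
Proof.
move=> Hfg I HI n Is HIs cover.
have [I0 ID IM] := HI.
apply: NNPP => nav.
have hy : forall k, exists y, I y /\ ~ Is k y.
  move=> k; apply: NNPP => h; apply: nav; exists k => x Ix.
  by apply: NNPP => nx; apply: h; exists x.
have [s [sI sk]] : exists s : seq R, (forall x, x \in s -> I x) /\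
    forall k : 'I_n, exists x, x \in s /\ ~ Is k x.
  suff : forall m, exists s : seq R, (forall x, x \in s -> I x) /\
      forall k : 'I_n, (k < m)%N -> exists x, x \in s /\ ~ Is k x.
    by case/(_ n) => s [? H]; exists s; split => // k; apply: H.
  elim=> [|m [s [sI H]]]; first by exists [::].
  case: (ltnP m n) => hm; last first.
    exists s; split => // k' _; apply: H; exact: leq_trans (ltn_ord k') hm.
  have [y [Iy ny]] := hy (Ordinal hm).
  exists (y :: s); split.
    by move=> x; rewrite inE => /orP [/eqP ->|]; [|apply: sI].
  move=> k'; rewrite ltnS leq_eqVlt => /orP [/eqP ek|lk].
    have -> : k' = Ordinal hm by apply: val_inj.
    by exists y; rewrite inE eqxx.
  have [x [xs nx]] := H k' lk; exists x; split => //.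
  by rewrite inE xs orbT.
pose J := fun x : R => exists c : 'I_(size s) -> R,
  x = \sum_(i < size s) c i * s`_i.
have HJ : is_ideal J.
  split.
  - by exists (fun _ => 0); rewrite big1 // => i _; rewrite mul0r.
  - move=> x y [c ->] [d ->]; exists (fun i => c i + d i).
    by rewrite -big_split; apply: eq_bigr => i _; rewrite mulrDl.
  - move=> r x [c ->]; exists (fun i => r * c i).
    by rewrite mulr_sumr; apply: eq_bigr => i _; rewrite mulrA.
have Jmem : forall x, x \in s -> J x.
  move=> x xs; have h : (index x s < size s)%N by rewrite index_mem.
  exists (fun j : 'I_(size s) => if val j == index x s then 1 else 0).
  rewrite (bigD1 (Ordinal h)) //= eqxx mul1r nth_index // big1 ?addr0 //.
  move=> j nj; rewrite ifF ?mul0r //; apply/negbTE; apply: contra nj => /eqP e.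
  by apply/eqP; apply: val_inj.
have JI : forall x, J x -> I x.
  move=> x [c ->]; apply: ideal_sum => // i; apply: IM; apply: sI.
  exact: mem_nth.
have Hmult : mult_ideal J by apply: Hfg => //; exists s => x; split.
have hyJ : forall k, exists y, J y /\ ~ Is k y.
  by move=> k; have [x [xs nx]] := sk k; exists x; split => //; apply: Jmem.
have Lk : forall k, {L : R -> Prop | is_ideal L /\
    forall x, (Is k x /\ J x) <-> ideal_mul J L x}.
  move=> k; apply: cid; apply: Hmult; last by move=> x [].
  have [K0 KD KM] := HIs k; have [J0 JD JM] := HJ.
  split; first by split.
  - by move=> x y [? ?] [? ?]; split; [apply: KD|apply: JD].
  - by move=> r x [? ?]; split; [apply: KM|apply: JM].
pose L k := sval (Lk k).
have Lprop : forall k, is_ideal (L k) /\ ~ L k 1 /\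
    forall x, (Is k x /\ J x) <-> ideal_mul J (L k) x.
  move=> k; rewrite /L; case: (Lk k) => Lx [HL HLe] /=; split => //; split => //.
  move=> L1; have [y [Jy ny]] := hyJ k; apply: ny.
  by have /HLe [] : ideal_mul J Lx y by rewrite -[y]mulr1; apply: im_single.
have Mk : forall k, {M : R -> Prop | maxl M /\ forall x, L k x -> M x}.
  move=> k; apply: cid; have [? [? _]] := Lprop k; exact: exists_maxl.
pose M k := sval (Mk k).
have Mprop : forall k, maxl (M k) /\ forall x, L k x -> M k x.
  by move=> k; rewrite /M; case: (Mk k).
have PAc : forall k, ~ (forall x, J x -> ideal_mul J (M k) x).
  move=> k sub; have [y [Jy ny]] := hyJ k.
  have [[HMk Mk1 _] _] := Mprop k.
  apply: Mk1; apply: (mult_cancel HJ HMk Hmult Jy) => //.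
  by apply/eqP => y0; apply: ny; rewrite y0; case: (HIs k).
have [z [Jz nz]] := prime_avoid HJ (fun k => (Mprop k).1) PAc.
have [k Ikz] := cover z (JI z Jz).
apply: (nz k); apply: im_mono (Mprop k).2 _.
by have [_ [_ HLe]] := Lprop k; apply/HLe.
Qed.
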